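(* There exists an absolute constant $\tau_0>1$ such that for every $\tau\in(1,\tau_0)$ there exists a compact set $K\subset\mathbb{R}$ with Newhouse thickness $\tau(K)=\tau$, having a unique largest bounded gap, such that $K$ contains no configuration of the form $\{x-t,\,x,\,x+t^2\}$ with $t>0$ and $x$ one of the two endpoints of the largest gap of $K$.
   Context: For a compact set $K\subset\mathbb{R}$, a gap of $K$ is a connected component of $\mathbb{R}\setminus K$. If $u$ is the right endpoint of a bounded gap $G$, the bridge at $u$ is the maximal interval $B=[u,v]$ such that every gap $G'$ of $K$ with $G'\subset B$ satisfies $|G'|\le|G|$; bridges at left endpoints of bounded gaps are defined symmetrically (maximal intervals $[v,u]$ with the same property). For such an endpoint $u$, set $\tau(K,u)=|B|/|G|$. The Newhouse thickness of $K$ is $\tau(K)=\inf_u\tau(K,u)$, the infimum over all endpoints $u$ of bounded gaps of $K$. *)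

(* Defs.v *)
From Stdlib Require Import Reals Lra.
From Stdlib Require Export Rtopology.
Open Scope R_scope.

(* (a,b) is a bounded gap of K: a bounded connected component of R \ K.
   For K compact (closed), these are exactly the open intervals (a,b) with
   a < b, a, b in K and (a,b) disjoint from K. *)
Definition is_bgap (K : R -> Prop) (a b : R) : Prop :=
  a < b /\ K a /\ K b /\ (forall x, a < x < b -> ~ K x).

(* Unbounded gaps (of infinite length) are handled by requiring the interval
   to lie in the convex hull of K (see bridge predicates below). *)
Definition meets_long_gap (K : R -> Prop) (L l r : R) : Prop :=
  exists c d, is_bgap K c d /\ d - c > L /\ exists x, c < x < d /\ l <= x <= r.

Definition right_bridge_ok (K : R -> Prop) (a b v : R) : Prop :=
  b <= v /\ (exists k, K k /\ v <= k) /\ ~ meets_long_gap K (b - a) b v.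

Definition left_bridge_ok (K : R -> Prop) (a b w : R) : Prop :=
  w <= a /\ (exists k, K k /\ k <= w) /\ ~ meets_long_gap K (b - a) w a.

Definition right_bridge (K : R -> Prop) (a b v : R) : Prop :=
  right_bridge_ok K a b v /\ forall v', right_bridge_ok K a b v' -> v' <= v.

Definition left_bridge (K : R -> Prop) (a b w : R) : Prop :=
  left_bridge_ok K a b w /\ forall w', left_bridge_ok K a b w' -> w <= w'.

Definition local_thickness_value (K : R -> Prop) (r : R) : Prop :=
  exists a b, is_bgap K a b /\
    ((exists v, right_bridge K a b v /\ r = (v - b) / (b - a)) \/
     (exists w, left_bridge K a b w /\ r = (a - w) / (b - a))).

Definition is_glb (E : R -> Prop) (m : R) : Prop :=
  (forall x, E x -> m <= x) /\ (forall m', (forall x, E x -> m' <= x) -> m' <= m).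

Definition newhouse_thickness (K : R -> Prop) (t : R) : Prop :=
  is_glb (local_thickness_value K) t.

Definition unique_largest_gap (K : R -> Prop) (a b : R) : Prop :=
  is_bgap K a b /\ forall c d, is_bgap K c d -> (c, d) <> (a, b) -> d - c < b - a.

(* Main.v *)
Require Import Defs.
From Stdlib Require Import Reals Lra.
Open Scope R_scope.

Definition Kset (T : R) (x : R) : Prop :=
  (-130 <= x <= -15) \/ (-9 <= x <= 0) \/ (100 <= x <= 100 + 100 * T).

Ltac inK := unfold Kset; first [left; lra | right; left; lra | right; right; lra].

Lemma closed_interval (a b : R) : closed_set (fun c => a <= c <= b).
Proof. apply compact_P2, compact_P3. Qed.

Lemma closed_union (A B : R -> Prop) :
  closed_set A -> closed_set B -> closed_set (fun x => A x \/ B x).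
Proof.
  intros HA HB x Hx.
  assert (Hi : intersection_domain (complementary A) (complementary B) x).
  { split; intro; apply Hx; tauto. }
  destruct (open_set_P3 _ _ HA HB x Hi) as [d Hd].
  exists d; intros y Hy [H|H]; destruct (Hd y Hy) as [H1 H2]; auto.
Qed.

Lemma K_compact T : 0 < T -> compact (Kset T).
Proof.
  intros HT. apply compact_P5.
  - unfold Kset. apply closed_union; [apply closed_interval|].
    apply closed_union; apply closed_interval.
  - exists (-130), (100 + 100 * T). intros x [H|[H|H]]; lra.
Qed.

Lemma K_gaps T c d : 0 < T -> is_bgap (Kset T) c d ->
  (c = -15 /\ d = -9) \/ (c = 0 /\ d = 100).
Proof.
  intros HT [Hcd [Hc [Hd Hn]]].
  Ltac wit Hn w := exfalso; apply (Hn w); [lra | inK].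
  destruct Hc as [Hc|[Hc|Hc]]; destruct Hd as [Hd|[Hd|Hd]];
    try (exfalso; lra); try (wit Hn ((c+d)/2)).
  - destruct (Rlt_or_le c (-15)); [wit Hn ((c-15)/2)|].
    destruct (Rlt_or_le (-9) d); [wit Hn ((d-9)/2)| left; lra].
  - wit Hn (-9).
  - destruct (Rlt_or_le c 0); [wit Hn (c/2)|].
    destruct (Rlt_or_le 100 d); [wit Hn ((d+100)/2)| right; lra].
Qed.

Lemma no_long T L l r : 0 < T ->
  (forall c d, ((c = -15 /\ d = -9) \/ (c = 0 /\ d = 100)) -> d - c > L ->
     forall x, c < x < d -> l <= x <= r -> False) ->
  ~ meets_long_gap (Kset T) L l r.
Proof.
  intros HT H [c [d [Hg [Hl [x [Hx Hlr]]]]]].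
  exact (H c d (K_gaps T c d HT Hg) Hl x Hx Hlr).
Qed.

Lemma gap1 T : 0 < T -> is_bgap (Kset T) (-15) (-9).
Proof.
  intros HT; split; [lra|split; [inK|split; [inK|]]].
  intros x Hx [H|[H|H]]; lra.
Qed.

Lemma gap2 T : 0 < T -> is_bgap (Kset T) 0 100.
Proof.
  intros HT; split; [lra|split; [inK|split; [inK|]]].
  intros x Hx [H|[H|H]]; lra.
Qed.

Lemma right_ge T a b v0 r : right_bridge_ok (Kset T) a b v0 ->
  0 < b - a -> r <= (v0 - b) / (b - a) ->
  forall v, right_bridge (Kset T) a b v -> r <= (v - b) / (b - a).
Proof.
  intros Hok Hba Hr v [_ Hmax].
  specialize (Hmax v0 Hok).
  apply Rle_trans with (1 := Hr).
  unfold Rdiv; apply Rmult_le_compat_r; [|lra].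
  left; apply Rinv_0_lt_compat; lra.
Qed.

Lemma left_ge T a b w0 r : left_bridge_ok (Kset T) a b w0 ->
  0 < b - a -> r <= (a - w0) / (b - a) ->
  forall w, left_bridge (Kset T) a b w -> r <= (a - w) / (b - a).
Proof.
  intros Hok Hba Hr w [_ Hmax].
  specialize (Hmax w0 Hok).
  apply Rle_trans with (1 := Hr).
  unfold Rdiv; apply Rmult_le_compat_r; [|lra].
  left; apply Rinv_0_lt_compat; lra.
Qed.

Lemma ratio_ge r n d : 0 < d -> r * d <= n -> r <= n / d.
Proof.
  intros Hd H. apply (Rmult_le_reg_r d); [lra|].
  unfold Rdiv; rewrite Rmult_assoc, Rinv_l; lra.
Qed.

Theorem mainTheorem6 :
  exists tau0 : R, 1 < tau0 /\
    forall tau : R, 1 < tau < tau0 ->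
      exists (K : R -> Prop) (a b : R),
        compact K /\
        newhouse_thickness K tau /\
        unique_largest_gap K a b /\
        forall x : R, (x = a \/ x = b) ->
          forall t : R, 0 < t -> ~ (K (x - t) /\ K x /\ K (x + t ^ 2)).
Proof.
  exists (6/5). split; [lra|].
  intros T HT. assert (HT0 : 0 < T) by lra.
  exists (Kset T), 0, 100.
  split; [apply K_compact; lra|].
  split.
  - split.
    + intros r [a [b [Hg Hr]]].
      destruct (K_gaps T a b HT0 Hg) as [[-> ->]|[-> ->]];
        destruct Hr as [[v [Hv ->]]|[w [Hw ->]]].
      * apply (right_ge T (-15) (-9) 0); auto; try lra; try (apply ratio_ge; lra).
        split; [lra|split; [exists 0; split; [inK|lra]|]].
           apply no_long; [lra|]. intros c d [[-> ->]|[-> ->]] Hl x Hx Hlr; lra.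
      * apply (left_ge T (-15) (-9) (-130)); auto; try lra; try (apply ratio_ge; lra).
        split; [lra|split; [exists (-130); split; [inK|lra]|]].
           apply no_long; [lra|]. intros c d [[-> ->]|[-> ->]] Hl x Hx Hlr; lra.
      * apply (right_ge T 0 100 (100 + 100 * T)); auto; try lra; try (apply ratio_ge; lra).
        split; [lra|split; [exists (100 + 100*T); split; [inK|lra]|]].
           apply no_long; [lra|]. intros c d [[-> ->]|[-> ->]] Hl x Hx Hlr; lra.
      * apply (left_ge T 0 100 (-130)); auto; try lra; try (apply ratio_ge; lra).
        split; [lra|split; [exists (-130); split; [inK|lra]|]].
           apply no_long; [lra|]. intros c d [[-> ->]|[-> ->]] Hl x Hx Hlr; lra.
    + intros m Hm. apply Hm.
      exists 0, 100. split; [apply gap2; lra|].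
      left. exists (100 + 100 * T). split.
      * split.
        -- split; [lra|split; [exists (100 + 100*T); split; [inK|lra]|]].
           apply no_long; [lra|]. intros c d [[-> ->]|[-> ->]] Hl x Hx Hlr; lra.
        -- intros v' [_ [[k [Hk Hvk]] _]].
           destruct Hk as [H|[H|H]]; lra.
      * field.
  - split.
    + split; [apply gap2; lra|].
      intros c d Hg Hne.
      destruct (K_gaps T c d HT0 Hg) as [[-> ->]|[-> ->]]; [lra|].
      exfalso; apply Hne; reflexivity.
    + intros x [-> | ->] t Ht [H1 [H2 H3]]; unfold Kset in *.
      * destruct H1 as [H1|[H1|H1]]; destruct H3 as [H3|[H3|H3]]; nra.
      * destruct H1 as [H1|[H1|H1]]; destruct H3 as [H3|[H3|H3]]; nra.
Qed.
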